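(* In the category $\mathrm{Vect}$ of vector spaces over a field and linear maps, the (surjective, injective) = (epi, mono) factorisation system is costable, i.e. monomorphisms are stable under pushout. Moreover, the assignment that is the identity on objects and sends an epi-mono corelation $U\xrightarrow{f}A\xleftarrow{g}V$ to the linear subspace $\ker[f\ \ -g]\subseteq U\oplus V$ is a full, faithful, bijective-on-objects functor $\mathrm{Corel}_{(\mathrm{Epi},\mathrm{Mono})}(\mathrm{Vect})\to\mathrm{LinRel}$; in particular these categories are isomorphic.
   Context: A factorisation system is costable if its right class is stable under pushout. For a factorisation system $(\mathcal E,\mathcal M)$ on a category with finite colimits, $\mathrm{Corel}_{(\mathcal E,\mathcal M)}$ has morphisms isomorphism classes of cospans $X\xrightarrow{i}N\xleftarrow{o}Y$ with $[i,o]\colon X+Y\to N$ in $\mathcal E$, composed by forming the pushout composite cospan $X\to N+_YM\leftarrow Z$ and then replacing the apex by the image $\overline{N+_YM}$ of the copairing $X+Z\to N+_YM$ (i.e. taking the $\mathcal E$ factor of its $(\mathcal E,\mathcal M)$-factorisation). $\mathrm{LinRel}$ is the category of vector spaces and linear relations $L\subseteq U\oplus V$, composed as relations: $(u,w)\in L;L'$ iff there is $v$ with $(u,v)\in L$, $(v,w)\in L'$. *)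

(* Defs.v *)
From HB Require Import structures.
From mathcomp Require Import all_boot all_order all_algebra.
Set Implicit Arguments. Unset Strict Implicit. Unset Printing Implicit Defensive.
Import GRing.Theory.
Local Open Scope ring_scope.

Section Defs.
Variable F : fieldType.

Definition is_pushout (A B C D : lmodType F)
  (f : {linear A -> B}) (g : {linear A -> C})
  (p : {linear B -> D}) (q : {linear C -> D}) : Prop :=
  (forall a, p (f a) = q (g a)) /\
  forall (E : lmodType F) (h : {linear B -> E}) (k : {linear C -> E}),
    (forall a, h (f a) = k (g a)) ->
    (exists u : {linear D -> E},
        (forall b, u (p b) = h b) /\ (forall c, u (q c) = k c)) /\
    (forall u1 u2 : {linear D -> E},
        (forall b, u1 (p b) = h b) -> (forall c, u1 (q c) = k c) ->
        (forall b, u2 (p b) = h b) -> (forall c, u2 (q c) = k c) ->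
        forall d, u1 d = u2 d).

(* An epi-mono corelation U -> N <- V : the copairing [i, o] : U (+) V -> N
   is surjective (lies in the class E of epimorphisms). *)
Record corel (U V : lmodType F) := Corel {
  apex : lmodType F;
  cin : {linear U -> apex};
  cout : {linear V -> apex};
  corel_epi : forall n : apex, exists u v, n = cin u + cout v }.

(* Isomorphism of cospans (morphisms of Corel are iso classes). *)
Definition corel_iso (U V : lmodType F) (c1 c2 : corel U V) : Prop :=
  exists phi : {linear apex c1 -> apex c2},
    bijective phi /\ (forall u, phi (cin c1 u) = cin c2 u) /\
    (forall v, phi (cout c1 v) = cout c2 v).

Lemma corel_id_epi (U : lmodType F) :
  forall n : U, exists u v, n = (@idfun U : {linear U -> U}) u + (@idfun U : {linear U -> U}) v.
Proof. by move=> n; exists n, 0; rewrite /= addr0. Qed.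

Definition corel_id (U : lmodType F) : corel U U :=
  @Corel U U U idfun idfun (@corel_id_epi U).

(* c3 is the Corel-composite of c1 : U -> V and c2 : V -> W:
   there is a pushout Q of  apex c1 <- V -> apex c2  and an injective
   (mono) linear m : apex c3 -> Q such that  U -> apex c3 -> W  followed by m
   is the pushout composite cospan; i.e. apex c3 (whose legs are jointly
   surjective) is the image of the copairing U (+) W -> Q. *)
Definition is_corel_comp (U V W : lmodType F)
  (c1 : corel U V) (c2 : corel V W) (c3 : corel U W) : Prop :=
  exists (Q : lmodType F) (p : {linear apex c1 -> Q}) (q : {linear apex c2 -> Q})
         (m : {linear apex c3 -> Q}),
    is_pushout (cout c1) (cin c2) p q /\ injective m /\
    (forall u, m (cin c3 u) = p (cin c1 u)) /\
    (forall w, m (cout c3 w) = q (cout c2 w)).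

Definition linrel (U V : lmodType F) := U -> V -> Prop.

Definition is_linrel (U V : lmodType F) (L : linrel U V) : Prop :=
  L 0 0 /\ forall (a : F) u v u' v', L u v -> L u' v' -> L (a *: u + u') (a *: v + v').

Definition linrel_eq (U V : lmodType F) (L L' : linrel U V) : Prop :=
  forall u v, L u v <-> L' u v.

Definition linrel_comp (U V W : lmodType F) (L : linrel U V) (L' : linrel V W) : linrel U W :=
  fun u w => exists v, L u v /\ L' v w.

Definition linrel_id (U : lmodType F) : linrel U U := fun u v => u = v.

Definition corel_to_linrel (U V : lmodType F) (c : corel U V) : linrel U V :=
  fun u v => cin c u - cout c v = 0.

End Defs.

(* Main.v *)
Require Import Defs.
From HB Require Import structures.
From mathcomp Require Import all_boot all_order all_algebra.
From mathcomp Require boolp.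
From Stdlib Require Import ClassicalEpsilon FunctionalExtensionality PropExtensionality ProofIrrelevance.
Set Implicit Arguments. Unset Strict Implicit. Unset Printing Implicit Defensive.
Import GRing.Theory.
Local Open Scope ring_scope.

Definition mk_linear (R : pzRingType) (U : lmodType R) (V : lmodType R) (f : U -> V)
  (H : linear f) : {linear U -> V} :=
  HB.pack f (GRing.isLinear.Build R U V *:%R f H).

Lemma mk_linearE (R : pzRingType) (U V : lmodType R) (f : U -> V) H x :
  @mk_linear R U V f H x = f x.
Proof. by []. Qed.

Record subsp (F : fieldType) (X : lmodType F) := Subsp {
  sp :> X -> Prop; sp0 : sp 0;
  spL : forall (a : F) x y, sp x -> sp y -> sp (a *: x + y) }.

Section Quot.
Variables (F : fieldType) (X : lmodType F) (SS : subsp X).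
Local Notation S := (sp SS).
Let S0 : S 0 := sp0 SS.
Let SL := @spL _ _ SS.

Lemma SD x y : S x -> S y -> S (x + y).
Proof. by move=> ??; rewrite -[x]scale1r; apply: SL. Qed.
Lemma SN x : S x -> S (- x).
Proof. by move=> ?; rewrite -scaleN1r -[_ *: _]addr0; apply: SL. Qed.
Lemma SZ a x : S x -> S (a *: x).
Proof. by move=> ?; rewrite -[_ *: _]addr0; apply: SL. Qed.

Definition coset (x : X) : X -> Prop := fun y => S (y - x).
Record QT := mkQ { qpred : X -> Prop ; qP : exists x, qpred = coset x }.
HB.instance Definition _ := boolp.gen_eqMixin QT.
HB.instance Definition _ := boolp.gen_choiceMixin QT.

Definition qpi (x : X) : QT := @mkQ (coset x) (ex_intro _ x erefl).
Definition qrepr (q : QT) : X := proj1_sig (constructive_indefinite_description _ (qP q)).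

Lemma Qeq (q1 q2 : QT) : qpred q1 = qpred q2 -> q1 = q2.
Proof.
case: q1 q2 => [p1 P1] [p2 P2] /= e; subst p2; congr mkQ; apply: proof_irrelevance.
Qed.

Lemma reprK q : qpi (qrepr q) = q.
Proof.
rewrite /qrepr; case: (constructive_indefinite_description _ _) => x /= e.
by apply: Qeq.
Qed.

Lemma pi_eq x y : qpi x = qpi y <-> S (x - y).
Proof.
split=> [e|Sxy].
  have : coset y x by rewrite -[coset y]/(qpred (qpi y)) -e /= /coset subrr.
  by [].
apply: Qeq => /=; apply: functional_extensionality => z.
apply: propositional_extensionality; rewrite /coset; split=> Hz.
  by have := SD Hz Sxy; rewrite addrA subrK.
by have := SD Hz (SN Sxy); rewrite opprB addrA subrK.
Qed.

Lemma pi_surj q : exists x, q = qpi x.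
Proof. by exists (qrepr q); rewrite reprK. Qed.

Lemma repr_pi x : S (qrepr (qpi x) - x).
Proof. by apply/pi_eq; rewrite reprK. Qed.

Definition qzero := qpi 0.
Definition qopp q := qpi (- qrepr q).
Definition qadd q1 q2 := qpi (qrepr q1 + qrepr q2).
Definition qscale (a : F) q := qpi (a *: qrepr q).

Lemma qoppE x : qopp (qpi x) = qpi (- x).
Proof. by apply/pi_eq; rewrite -opprD; apply/SN/repr_pi. Qed.
Lemma qaddE x y : qadd (qpi x) (qpi y) = qpi (x + y).
Proof.
apply/pi_eq; rewrite opprD addrACA; apply: SD; exact: repr_pi.
Qed.
Lemma qscaleE a x : qscale a (qpi x) = qpi (a *: x).
Proof. by apply/pi_eq; rewrite -scalerBr; apply/SZ/repr_pi. Qed.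

Lemma qaddA : associative qadd.
Proof.
move=> q1 q2 q3; have [x1 ->] := pi_surj q1; have [x2 ->] := pi_surj q2.
have [x3 ->] := pi_surj q3; by rewrite !qaddE addrA.
Qed.
Lemma qaddC : commutative qadd.
Proof.
move=> q1 q2; have [x1 ->] := pi_surj q1; have [x2 ->] := pi_surj q2.
by rewrite !qaddE addrC.
Qed.
Lemma qadd0 : left_id qzero qadd.
Proof. move=> q; have [x ->] := pi_surj q; by rewrite qaddE add0r. Qed.
Lemma qaddN : left_inverse qzero qopp qadd.
Proof. move=> q; have [x ->] := pi_surj q; by rewrite qoppE qaddE addNr. Qed.

HB.instance Definition _ := GRing.isZmodule.Build QT qaddA qaddC qadd0 qaddN.

Lemma piD x y : qpi x + qpi y = qpi (x + y). Proof. exact: qaddE. Qed.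
Lemma piN x : - qpi x = qpi (- x). Proof. exact: qoppE. Qed.
Lemma pi0 : 0 = qpi 0. Proof. by []. Qed.

Lemma qscaleA a b q : qscale a (qscale b q) = qscale (a * b) q.
Proof. have [x ->] := pi_surj q; by rewrite !qscaleE scalerA. Qed.
Lemma qscale1 : left_id 1 qscale.
Proof. move=> q; have [x ->] := pi_surj q; by rewrite !qscaleE scale1r. Qed.
Lemma qscaleDr : right_distributive qscale +%R.
Proof.
move=> a q1 q2; have [x1 ->] := pi_surj q1; have [x2 ->] := pi_surj q2.
by rewrite piD !qscaleE piD scalerDr.
Qed.
Lemma qscaleDl v : {morph qscale^~ v : a b / a + b}.
Proof.
move=> a b; have [x ->] := pi_surj v.
by rewrite !qscaleE piD scalerDl.
Qed.

HB.instance Definition _ := GRing.Zmodule_isLmodule.Build F QT qscaleA qscale1 qscaleDr qscaleDl.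

Lemma pi_linear : linear qpi.
Proof. by move=> a x y; rewrite -piD -qscaleE. Qed.
Definition piL : {linear X -> QT} := mk_linear pi_linear.

Variables (E : lmodType F) (phi : {linear X -> E}).
Hypothesis phiS : forall x, S x -> phi x = 0.
Definition lift (q : QT) : E := phi (qrepr q).
Lemma liftE x : lift (qpi x) = phi x.
Proof. apply/eqP; rewrite -subr_eq0 -linearB phiS //; exact: repr_pi. Qed.
Lemma lift_linear : linear lift.
Proof.
move=> a q1 q2; have [x1 ->] := pi_surj q1; have [x2 ->] := pi_surj q2.
rewrite -[a *: qpi x1]/(qscale a (qpi x1)) qscaleE piD.
by rewrite !liftE linearP.
Qed.
Lemma piZ a x : a *: qpi x = qpi (a *: x). Proof. exact: qscaleE. Qed.
Definition liftL : {linear QT -> E} := mk_linear lift_linear.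
End Quot.

Lemma pair_eq (A B : Type) (x y : A * B) : x.1 = y.1 -> x.2 = y.2 -> x = y.
Proof. by case: x y => ?? [??] /= -> ->. Qed.

Section Gen.
Variable F : fieldType.

Definition compL (A B C : lmodType F) (g : {linear B -> C}) (f : {linear A -> B})
  : {linear A -> C}.
refine (@mk_linear F A C (fun x => g (f x)) _).
by move=> a x y; rewrite !linearP.
Defined.
Lemma compLE (A B C : lmodType F) (g : {linear B -> C}) (f : {linear A -> B}) x :
  compL g f x = g (f x).
Proof. by []. Qed.

Definition inlL (B C : lmodType F) : {linear B -> (B * C)%type}.
refine (@mk_linear F B (B * C)%type (fun b => (b, 0)) _).
by move=> a x y; apply: pair_eq => //=; rewrite scaler0 addr0.
Defined.
Definition inrL (B C : lmodType F) : {linear C -> (B * C)%type}.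
refine (@mk_linear F C (B * C)%type (fun c => (0, c)) _).
by move=> a x y; apply: pair_eq => //=; rewrite scaler0 addr0.
Defined.

Lemma pi_pair (B C : lmodType F) (SS : subsp (B * C)%type) (x : B * C) :
  qpi SS x = qpi SS (x.1, 0) + qpi SS (0, x.2).
Proof. by rewrite piD; congr qpi; apply: pair_eq => /=; rewrite ?addr0 ?add0r. Qed.

Definition kerS (A B : lmodType F) (phi : {linear A -> B}) : subsp A.
refine (@Subsp F A (fun x => phi x = 0) _ _).
  exact: linear0.
by move=> a x y /= h1 h2; rewrite linearP h1 h2 scaler0 addr0.
Defined.

Section PO.
Variables (A B C : lmodType F) (f : {linear A -> B}) (g : {linear A -> C}).

Definition POS : subsp (B * C)%type.
refine (@Subsp F (B * C)%type (fun x => exists a, x.1 = f a /\ x.2 = - g a) _ _).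
  by exists 0; rewrite /= !linear0 ?oppr0.
move=> k x y [a1 [h1 h2]] [a2 [h3 h4]]; exists (k *: a1 + a2) => /=.
by rewrite h1 h2 h3 h4 !linearP.
Defined.

Definition PO := QT POS.
Definition p0 : {linear B -> PO} := compL (piL POS) (inlL B C).
Definition q0 : {linear C -> PO} := compL (piL POS) (inrL B C).

Lemma p0q0 b c : p0 b = q0 c -> exists a, b = f a /\ c = g a.
Proof.
move=> /pi_eq [a /= [h1 h2]]; exists a; split.
  by rewrite -h1 subr0.
by apply: oppr_inj; rewrite -h2 sub0r.
Qed.

Lemma PO_pushout : is_pushout f g p0 q0.
Proof.
split.
  move=> a; apply/pi_eq; exists a => /=; by rewrite subr0 sub0r.
move=> E h k hk.
pose phi0 := fun x : B * C => h x.1 + k x.2.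
have phil : linear phi0.
  by move=> a x y; rewrite /phi0 /= !linearP scalerDr addrACA.
pose phi := mk_linear phil.
have phiS : forall x, POS x -> phi x = 0.
  move=> x [a [h1 h2]]; rewrite mk_linearE /phi0 h1 h2 linearN hk subrr //.
have Ep : forall x, liftL phiS (qpi POS x) = h x.1 + k x.2.
  by move=> x; rewrite mk_linearE liftE.
split.
  exists (liftL phiS); split.
    by move=> b; rewrite /p0 compLE Ep /= linear0 addr0.
  by move=> c; rewrite /q0 compLE Ep /= linear0 add0r.
move=> u1 u2 H1 H2 H3 H4 d.
have [x ->] := pi_surj d; rewrite pi_pair.
rewrite !linearD.
have -> : qpi POS (x.1, 0) = p0 x.1 by [].
have -> : qpi POS (0, x.2) = q0 x.2 by [].
by rewrite H1 H2 H3 H4.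
Qed.

Lemma pushout_joint (D : lmodType F) (p : {linear B -> D}) (q : {linear C -> D}) :
  is_pushout f g p q -> forall b c, p b = q c -> exists a, b = f a /\ c = g a.
Proof.
move=> [_ U] b c e.
have [[u [hu1 hu2]] _] := U _ p0 q0 (proj1 PO_pushout).
by apply: p0q0; rewrite -hu1 -hu2 e.
Qed.
End PO.

Lemma keyE (M : zmodType) (a a' b b' : M) : (a - a') - (b' - b) = (a + b) - (a' + b').
Proof. by rewrite opprB addrACA -opprD. Qed.

Section Faith.
Variables (U V : lmodType F) (c1 c2 : corel U V).
Hypothesis H : linrel_eq (corel_to_linrel c1) (corel_to_linrel c2).

Lemma transfer u v u' v' :
  cin c1 u + cout c1 v = cin c1 u' + cout c1 v' ->
  cin c2 u + cout c2 v = cin c2 u' + cout c2 v'.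
Proof.
move=> e.
have L1 : corel_to_linrel c1 (u - u') (v' - v).
  by rewrite /corel_to_linrel (linearB (cin c1)) (linearB (cout c1)) keyE e subrr.
move/H: L1; rewrite /corel_to_linrel (linearB (cin c2)) (linearB (cout c2)) keyE => /eqP.
by rewrite subr_eq0 => /eqP.
Qed.

Definition rep (n : apex c1) : U * V :=
  let s := constructive_indefinite_description _ (corel_epi n) in
  (proj1_sig s, proj1_sig (constructive_indefinite_description _ (proj2_sig s))).
Lemma repP n : n = cin c1 (rep n).1 + cout c1 (rep n).2.
Proof.
rewrite /rep; case: (constructive_indefinite_description _ _) => u /= e.
by case: (constructive_indefinite_description _ _).
Qed.

Definition phi12 (n : apex c1) : apex c2 := cin c2 (rep n).1 + cout c2 (rep n).2.
Lemma phi12E u v : phi12 (cin c1 u + cout c1 v) = cin c2 u + cout c2 v.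
Proof. by apply: transfer; rewrite -repP. Qed.
Lemma phi12_linear : linear phi12.
Proof.
move=> a n n'; have [u [v ->]] := corel_epi n; have [u' [v' ->]] := corel_epi n'.
have -> : a *: (cin c1 u + cout c1 v) + (cin c1 u' + cout c1 v') =
  cin c1 (a *: u + u') + cout c1 (a *: v + v').
  by rewrite !linearP scalerDr addrACA.
by rewrite !phi12E !linearP scalerDr addrACA.
Qed.
End Faith.

End Gen.

Lemma faithful (F : fieldType) (U V : lmodType F) (c1 c2 : corel U V) :
  linrel_eq (corel_to_linrel c1) (corel_to_linrel c2) -> corel_iso c1 c2.
Proof.
move=> H.
have H' : linrel_eq (corel_to_linrel c2) (corel_to_linrel c1).
  by move=> u v; split => /H.
exists (mk_linear (phi12_linear H)); split; last first.
  split=> [u|v]; rewrite mk_linearE.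
    by have := phi12E H u 0; rewrite !raddf0 !addr0.
  by have := phi12E H 0 v; rewrite !raddf0 !add0r.
exists (phi12 c1) => n; rewrite mk_linearE.
  by have [u [v ->]] := corel_epi n; rewrite (phi12E H) (phi12E H').
by have [u [v ->]] := corel_epi n; rewrite (phi12E H') (phi12E H).
Qed.

Definition fullS (F : fieldType) (U V : lmodType F) (L : linrel U V)
  (HL : is_linrel L) : subsp (U * V)%type.
refine (@Subsp F (U * V)%type (fun x => L x.1 (- x.2)) _ _).
  by rewrite /= oppr0; case: HL.
by move=> a x y h1 h2 /=; rewrite opprD -scalerN; apply: (proj2 HL).
Defined.

Lemma full (F : fieldType) (U V : lmodType F) (L : linrel U V) :
  is_linrel L -> exists c : corel U V, linrel_eq (corel_to_linrel c) L.
Proof.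
move=> HL; pose SS := fullS HL.
have epi : forall n : QT SS, exists u v, n = compL (piL SS) (inlL U V) u + compL (piL SS) (inrL U V) v.
  move=> n; have [x ->] := pi_surj n; exists x.1, x.2; exact: pi_pair.
exists (Corel epi) => u v; rewrite /corel_to_linrel /=.
rewrite piN piD pi0.
split.
  by move/pi_eq; rewrite /= !subr0 sub0r opprK.
by move=> h; apply/pi_eq; rewrite /= !subr0 sub0r opprK.
Qed.

Section CE.
Variables (F : fieldType) (U V W : lmodType F) (c1 : corel U V) (c2 : corel V W).
Definition cP := PO (cout c1) (cin c2).
Definition cp : {linear apex c1 -> cP} := p0 (cout c1) (cin c2).
Definition cq : {linear apex c2 -> cP} := q0 (cout c1) (cin c2).
Definition cphi0 (x : U * W) : cP := cp (cin c1 x.1) + cq (cout c2 x.2).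
Lemma cphil : linear cphi0.
Proof.
move=> a x y; rewrite /cphi0.
have -> : (a *: x + y).1 = a *: x.1 + y.1 by [].
have -> : (a *: x + y).2 = a *: x.2 + y.2 by [].
rewrite (linearP (cin c1)) (linearP (cout c2)) (linearP cp) (linearP cq).
by rewrite scalerDr addrACA.
Qed.
Definition cphi : {linear (U * W)%type -> cP} := mk_linear cphil.
Definition cS := kerS cphi.
Lemma cphiS x : cS x -> cphi x = 0. Proof. by []. Qed.
Definition cm : {linear QT cS -> cP} := liftL cphiS.
Definition ci : {linear U -> QT cS} := compL (piL cS) (inlL U W).
Definition co : {linear W -> QT cS} := compL (piL cS) (inrL U W).
Lemma cepi (n : QT cS) : exists u w, n = ci u + co w.
Proof. have [x ->] := pi_surj n; exists x.1, x.2; exact: pi_pair. Qed.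
Definition c3 := Corel cepi.
Lemma cmE x : cm (qpi cS x) = cphi0 x.
Proof. by rewrite /cm mk_linearE liftE. Qed.
Lemma c3comp : is_corel_comp c1 c2 c3.
Proof.
exists cP, cp, cq, cm; split; first exact: PO_pushout.
split.
  move=> n1 n2; have [x ->] := pi_surj n1; have [y ->] := pi_surj n2.
  rewrite !cmE => e; apply/pi_eq.
  have h : cphi (x - y) = 0.
    by rewrite linearB /cphi !mk_linearE e subrr.
  exact: h.
split.
  move=> u; have -> : cm (cin c3 u) = cm (qpi cS (u, 0)) by [].
  by rewrite cmE /cphi0 [X in cq X]linear0 linear0 addr0.
move=> w; have -> : cm (cout c3 w) = cm (qpi cS (0, w)) by [].
by rewrite cmE /cphi0 [X in cp X]linear0 linear0 add0r.
Qed.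
End CE.

Lemma comp_law (F : fieldType) (U V W : lmodType F) (c1 : corel U V) (c2 : corel V W) (c3 : corel U W) :
  is_corel_comp c1 c2 c3 ->
  linrel_eq (corel_to_linrel c3) (linrel_comp (corel_to_linrel c1) (corel_to_linrel c2)).
Proof.
move=> [Q [p [q [m [po [minj [e1 e2]]]]]]] u w.
rewrite /corel_to_linrel /linrel_comp; split.
  move=> /subr0_eq h.
  have : p (cin c1 u) = q (cout c2 w) by rewrite -e1 -e2 h.
  move=> /(pushout_joint po) [v [h1 h2]]; exists v.
  by rewrite h1 -h2 !subrr.
move=> [v [/subr0_eq h1 /subr0_eq h2]].
apply/eqP; rewrite subr_eq0; apply/eqP; apply: minj.
by rewrite e1 e2 h1 -h2 (proj1 po).
Qed.

Unset Implicit Arguments.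
Theorem mainTheorem14 (F : fieldType) :
  (forall (A B C D : lmodType F) (f : {linear A -> B}) (g : {linear A -> C})
          (p : {linear B -> D}) (q : {linear C -> D}),
      is_pushout f g p q -> injective f -> injective q) /\
  (forall (U V : lmodType F) (c1 c2 : corel U V),
      corel_iso c1 c2 -> linrel_eq (corel_to_linrel c1) (corel_to_linrel c2)) /\
  (forall (U V : lmodType F) (c : corel U V), is_linrel (corel_to_linrel c)) /\
  (forall U : lmodType F, linrel_eq (corel_to_linrel (corel_id U)) (@linrel_id F U)) /\
  (forall (U V W : lmodType F) (c1 : corel U V) (c2 : corel V W),
      exists c3 : corel U W, is_corel_comp c1 c2 c3) /\
  (forall (U V W : lmodType F) (c1 : corel U V) (c2 : corel V W) (c3 : corel U W),
      is_corel_comp c1 c2 c3 ->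
      linrel_eq (corel_to_linrel c3)
                (linrel_comp (corel_to_linrel c1) (corel_to_linrel c2))) /\
  (forall (U V : lmodType F) (c1 c2 : corel U V),
      linrel_eq (corel_to_linrel c1) (corel_to_linrel c2) -> corel_iso c1 c2) /\
  (forall (U V : lmodType F) (L : linrel U V),
      is_linrel L -> exists c : corel U V, linrel_eq (corel_to_linrel c) L).
Proof.
split.
  move=> A B C D f g p q po finj c c' e.
  have : p 0 = q (c - c') by rewrite linear0 linearB e subrr.
  move=> /(pushout_joint po) [a [h1 h2]].
  have a0 : a = 0 by apply: finj; rewrite -h1 linear0.
  by apply/eqP; rewrite -subr_eq0 h2 a0 linear0.
split.
  move=> U V c1 c2 [phi [[psi K1 K2] [e1 e2]]] u v; rewrite /corel_to_linrel.
  split=> h.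
    by rewrite -e1 -e2 -linearB h linear0.
  by apply: (can_inj K1); rewrite linearB e1 e2 h linear0.
split.
  move=> U V c; rewrite /is_linrel /corel_to_linrel; split.
    by rewrite (linear0 (cin c)) (linear0 (cout c)) subrr.
  move=> a u v u' v' /subr0_eq h1 /subr0_eq h2.
  by rewrite (linearP (cin c)) (linearP (cout c)) h1 h2 subrr.
split.
  move=> U u v; rewrite /corel_to_linrel /linrel_id /=; split.
    exact: subr0_eq.
  by move=> ->; rewrite subrr.
split; first by move=> U V W c1 c2; exists (c3 c1 c2); exact: c3comp.
split; first exact: comp_law.
split; first exact: faithful.
exact: full.
Qed.
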